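(* Let $T=(V',E_T)$ be a finite tree rooted at a vertex $r$ that is a centroid of $T$. Then $S_c(T)=S_d(T)$.
   Context: For $x,y\in V'$, $d_T(x,y)$ is the number of edges on the path between $x$ and $y$ in $T$. The vertex deviation of $v\in V'$ is $m(v)=\frac{1}{|V'|}\sum_{u\in V'}d_T(v,u)$, and a centroid of $T$ is a vertex minimizing $m(v)$. $S_d(T)=\sum_{x\in V'} d_T(r,x)$ for the root $r$. For an edge $e\in E_T$, removing $e$ splits $T$ into two trees $T_1,T_2$; the cut number of $e$ is $c(e)=\min(|T_1|,|T_2|)$ (sizes counted in vertices), and $S_c(T)=\sum_{e\in E_T}c(e)$. *)

(* Defs.v *)
From mathcomp Require Import all_boot all_order all_algebra.
Set Implicit Arguments. Unset Strict Implicit. Unset Printing Implicit Defensive.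
Import Order.TTheory GRing.Theory Num.Theory.

(* A finite simple graph on vertex type T : finType is a symmetric,
   irreflexive relation e : rel T. *)
Section Trees.
Variables (T : finType) (e : rel T).

Definition is_tree : Prop :=
  (forall x y : T, connect e x y) /\
  (forall p : seq T, uniq p -> 3 <= size p -> ~~ cycle e p).

Definition walk_n (n : nat) (x y : T) : bool :=
  [exists p : n.-tuple T, path e x p && (last x p == y)].

(* d_T(x,y): least number of edges of a walk from x to y (in a tree, the
   number of edges of the unique path). Such a walk always has < #|T| edges
   in a connected graph. *)
Definition dist (x y : T) : nat := find (fun n => walk_n n x y) (iota 0 #|T|).

Definition deviation (v : T) : rat :=
  ((\sum_(u : T) dist v u)%:R / #|T|%:R)%R.

Definition is_centroid (r : T) : Prop := forall v : T, (deviation r <= deviation v)%R.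

Definition Sd (r : T) : nat := \sum_(x : T) dist r x.

Definition edges : {set {set T}} := [set [set x; y] | x in T, y in T & e x y].

Definition erase_edge (E : {set T}) : rel T :=
  fun a b => e a b && ([set a; b] != E).

(* cut number: removing E splits T into two trees, each containing one
   endpoint of E; c(E) = min of their sizes. *)
Definition cut_number (E : {set T}) : nat :=
  \big[minn/#|T|]_(x in E) #|[set z | connect (erase_edge E) x z]|.

Definition Sc : nat := \sum_(E in edges) cut_number E.

End Trees.

(* Main.v *)
Require Import Defs.
From mathcomp Require Import all_boot all_order all_algebra.
From mathcomp Require Import zify.
From HB Require Import structures.

HB.instance Definition _ := SemiGroup.isComLaw.Build nat minn minnA minnC.

Set Implicit Arguments. Unset Strict Implicit. Unset Printing Implicit Defensive.

Section Proof.
Variables (T : finType) (e : rel T).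
Hypothesis sym_e : symmetric e.
Hypothesis irr_e : irreflexive e.
Hypothesis conn : forall x y : T, connect e x y.
Hypothesis acyc : forall p : seq T, uniq p -> 3 <= size p -> ~~ cycle e p.

Local Notation er := (erase_edge e).

Lemma er_sub E : subrel (er E) e.
Proof. by move=> a b /andP[]. Qed.

Lemma set2C (a b : T) : [set a; b] = [set b; a].
Proof. by rewrite setUC. Qed.

Lemma er_sym E : symmetric (er E).
Proof. by move=> a b; rewrite /erase_edge sym_e set2C. Qed.

Lemma csym E x y : connect (er E) x y = connect (er E) y x.
Proof. exact: (sym_connect_sym (er_sym E)). Qed.

Lemma er_edge E a b : e a b -> [set a; b] != E -> er E a b.
Proof. by move=> h1 h2; rewrite /erase_edge h1 h2. Qed.

Lemma avoid_path (g : rel T) : subrel g e -> forall z z' x p,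
  path g x p -> z \notin x :: p -> path (er [set z; z']) x p.
Proof.
move=> sg z z' x p; elim: p x => [|y p IH] x //= /andP[gxy pp].
rewrite !inE negb_or => /andP[zx]; rewrite negb_or => /andP[zy zp].
rewrite IH ?inE ?negb_or ?zy ?zp // andbT /erase_edge (sg _ _ gxy) /=.
apply/eqP => h; have : z \in [set x; y] by rewrite h !inE eqxx.
by rewrite !inE (negPf zx) (negPf zy).
Qed.

Lemma avoid_connect (g : rel T) z z' x y : subrel g e ->
  connect g x y -> ~~ connect g x z -> connect (er [set z; z']) x y.
Proof.
move=> sg /connectP [p pp ->] nz; apply/connectP; exists p => //.
apply: (avoid_path sg) => //; apply/negP => /(path_connect pp) h.
by rewrite h in nz.
Qed.

Lemma upath (g : rel T) x y : connect g x y ->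
  exists p, [/\ path g x p, uniq (x :: p) & last x p = y].
Proof.
case/connectP => p pp ->; case: (shortenP pp) => p' pp' up' _.
by exists p'.
Qed.

Lemma TF a b : e a b -> ~~ connect (er [set a; b]) a b.
Proof.
move=> eab; apply/negP => /upath [p [pp up lp]].
case: p pp up lp => [|c [|d q]] /=.
- by move=> _ _ h; subst a; rewrite irr_e in eab.
- by move=> /andP[h _] _ h'; subst c; move: h; rewrite /erase_edge eqxx andbF.
move=> pp up lp.
have := @acyc [:: a, c, d & q] up isT.
rewrite /cycle rcons_path; apply/negP; rewrite negbK.
have pe := sub_path (@er_sub _) (p := [:: c, d & q]) pp.
by rewrite pe /= lp sym_e.
Qed.

Lemma two_comp a b z : e a b ->
  connect (er [set a; b]) a z || connect (er [set a; b]) b z.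
Proof.
move=> eab; have [p [pp up lp]] := upath (conn a z).
case: (boolP (b \in p)) => bp.
- apply/orP; right; move: pp up lp; case/splitPr: bp => p1 p2.
  rewrite cat_path last_cat => /andP[_ /= /andP[_ pp2]] up lp.
  apply/connectP; exists p2 => //.
  apply: (avoid_path (fun _ _ h => h)) => //.
  by move: up => /andP[]; rewrite mem_cat negb_or => /andP[].
- apply/orP; left; rewrite set2C; apply/connectP; exists p => //.
  apply: (avoid_path (fun _ _ h => h)) => //.
  by rewrite inE negb_or bp andbT; apply/eqP => h; rewrite h irr_e in eab.
Qed.


Lemma excl a b z : e a b -> connect (er [set a; b]) a z ->
  connect (er [set a; b]) b z -> False.
Proof.
move=> eab h1 h2; have := TF eab; rewrite (connect_trans h1) //.
by rewrite csym.
Qed.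

Lemma in_edges a b : e a b -> [set a; b] \in edges e.
Proof. by move=> eab; apply/imset2P; exists a b; rewrite ?inE. Qed.

Lemma edgesP E : E \in edges e -> exists a b, e a b /\ E = [set a; b].
Proof. by case/imset2P => a b _; rewrite inE => /andP[_ h] ->; exists a, b. Qed.

Definition S x y := [set E in edges e | ~~ connect (er E) x y].
Definition Ds x y := #|S x y|.

Lemma SC x y : S x y = S y x.
Proof. by apply/setP => E; rewrite !inE csym. Qed.

Lemma DsC x y : Ds x y = Ds y x.
Proof. by rewrite /Ds SC. Qed.

Lemma Ds0 x : Ds x x = 0.
Proof.
apply/eqP; rewrite cards_eq0; apply/eqP/setP => E.
by rewrite !inE connect0 andbF.
Qed.

Lemma Ds_tri x y z : Ds x z <= Ds x y + Ds y z.
Proof.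
have h : S x z \subset S x y :|: S y z.
  apply/subsetP => E; rewrite !inE => /andP[-> h] /=.
  rewrite -negb_and; apply/negP => /andP[h1 h2].
  by move/negP: h; apply; apply: connect_trans h1 h2.
rewrite /Ds; apply: leq_trans (subset_leq_card h) _; rewrite cardsU; exact: leq_subr.
Qed.

Lemma step_le x x' y : e x x' -> Ds x y <= Ds x' y + 1.
Proof.
move=> exx; have: S x y \subset [set [set x; x']] :|: S x' y.
  apply/subsetP => E; rewrite !inE => /andP[Ee nc].
  case: (E =P [set x; x']) => //= hne; rewrite Ee /=.
  apply/negP => c'; move/negP: nc; apply.
  apply: connect_trans c'; apply: connect1; apply: er_edge => //.
  by apply/eqP => h; apply: hne.
move/subset_leq_card; rewrite cardsU cards1 => h.
rewrite /Ds addnC; apply: leq_trans h _; exact: leq_subr.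
Qed.

Lemma lower x p : path e x p -> Ds x (last x p) <= size p.
Proof.
elim: p x => [|y p IH] x /=; first by rewrite Ds0.
move=> /andP[exy pp]; apply: leq_trans (step_le _ exy) _.
by rewrite addn1 ltnS IH.
Qed.

Lemma exists_step x y : x != y -> exists2 x', e x x' & Ds x' y < Ds x y.
Proof.
move=> nxy; have [p [pp up lp]] := upath (conn x y).
case: p pp up lp => [|x' q] /=; first by move=> _ _ h; rewrite h eqxx in nxy.
move=> /andP[exx pq] /andP[xq _] lq; exists x' => //.
have cb : connect (er [set x; x']) x' y.
  apply/connectP; exists q => //; exact: (avoid_path (fun _ _ h => h)).
have Fin : [set x; x'] \in S x y.
  rewrite inE in_edges //=; apply/negP => cxy.
  have := TF exx; rewrite (connect_trans cxy) //; by rewrite csym.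
have sub : S x' y \subset S x y :\ [set x; x'].
  apply/subsetP => E; rewrite !inE => /andP[Ee nc].
  have hne : E != [set x; x'] by apply/eqP => h; rewrite h cb in nc.
  rewrite hne Ee /=; apply/negP => cxy; move/negP: nc; apply.
  apply: connect_trans cxy; apply: connect1; apply: er_edge; first by rewrite sym_e.
  by rewrite set2C eq_sym.
rewrite /Ds (cardsD1 [set x; x'] (S x y)) Fin add1n ltnS.
exact: subset_leq_card.
Qed.

Lemma upper n x y : Ds x y <= n ->
  exists p, [/\ path e x p, last x p = y & size p <= Ds x y].
Proof.
elim: n x => [|n IH] x.
  rewrite leqn0 => /eqP h0; case: (x =P y) => [<-|/eqP nxy]; first by exists [::].
  by have [x' _] := exists_step nxy; rewrite h0.
move=> hn; case: (x =P y) => [<-|/eqP nxy]; first by exists [::].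
have [x' exx lt] := exists_step nxy.
have [p [pp lp sp]] := IH x' (leq_trans lt hn).
by exists (x' :: p); rewrite /= exx pp lp; split => //; apply: leq_trans lt; rewrite ltnS.
Qed.

Lemma Ds_lt x y : Ds x y < #|T|.
Proof.
have [p [pp up lp]] := upath (conn x y).
apply: leq_trans (max_card (mem (x :: p))).
rewrite (card_uniqP up) /= ltnS -lp; exact: lower.
Qed.

Lemma dist_Ds x y : dist e x y = Ds x y.
Proof.
have [p [pp lp sp]] := upper (leqnn (Ds x y)).
have szp : size p = Ds x y by apply/eqP; rewrite eqn_leq sp -{1}lp lower.
have wk : walk_n e (Ds x y) x y.
  by apply/existsP; exists (@Tuple _ T p (introT eqP szp)); rewrite /= pp lp eqxx.
have hs : has (fun n => walk_n e n x y) (iota 0 #|T|).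
  by apply/hasP; exists (Ds x y) => //; rewrite mem_iota add0n Ds_lt.
rewrite /dist; set i := find _ _.
have ilt : i < #|T| by rewrite -[X in _ < X](size_iota 0) -has_find.
have wi := nth_find 0 hs; rewrite -/i nth_iota // add0n in wi.
apply/eqP; rewrite eqn_leq; apply/andP; split.
  rewrite leqNgt; apply/negP => lt.
  have := before_find 0 lt; rewrite nth_iota ?add0n ?wk //.
  exact: Ds_lt.
case/existsP: wi => t /andP[pt /eqP lt].
by have := lower pt; rewrite lt size_tuple.
Qed.


Lemma sum_card (A : {pred T}) : \sum_(u : T) (u \in A : nat) = #|A|.
Proof.
rewrite -sum1_card [in RHS]big_mkcond /=; apply: eq_bigr => u _.
by case: (u \in A).
Qed.

Lemma far_le a b r : e a b -> connect (er [set a; b]) a r ->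
  (forall v, \sum_u Ds r u <= \sum_u Ds v u) ->
  #|[set x | ~~ connect (er [set a; b]) r x]| <=
  #|[set x | connect (er [set a; b]) r x]|.
Proof.
move=> eab har cen.
set E := [set a; b].
set A := [set x | connect (er E) r x].
set B := [set x | ~~ connect (er E) r x].
have hra : connect (er E) r a by rewrite csym.
have nrb : ~~ connect (er E) r b.
  apply/negP => crb; have := TF eab; rewrite -/E (connect_trans har crb) //.
set k := Ds r b.
have k0 : 0 < k.
  rewrite /k /Ds card_gt0; apply/set0Pn; exists E; rewrite inE in_edges //.
have pt : forall u, Ds b u + k * (u \in B) <= Ds r u + k * (u \in A).
  move=> u; rewrite !inE; case: (boolP (connect (er E) r u)) => cu /=.
    rewrite muln0 addn0 muln1; apply: leq_trans (Ds_tri b r u) _.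
    by rewrite DsC addnC.
  rewrite muln1 muln0 addn0.
  have cbu : connect (er E) b u.
    case/orP: (two_comp u eab) => // h.
    by rewrite (connect_trans hra h) in cu.
  have key : forall E', E' \in S r b -> E' \in S b u -> False.
    move=> E'; rewrite !inE => /andP[E'e n1] /andP[_ n2].
    have [c [d [ecd hE']]] := edgesP E'e; rewrite hE' in n1 n2.
    case: (boolP (connect (er E) b c)) => cbc.
      have nrc : ~~ connect (er E) r c.
        apply/negP => crc; move/negP: nrb; apply.
        by apply: connect_trans crc _; rewrite csym.
      have cra : connect (er [set c; d]) r a.
        exact: (avoid_connect _ (@er_sub E) hra nrc).
      move/negP: n1; apply; apply: connect_trans cra (connect1 _).
      apply: er_edge => //; apply/eqP => h.
      by move: n2; rewrite -h -/E cbu.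
    have := avoid_connect d (@er_sub E) cbu cbc.
    by rewrite (negPf n2).
  have sub : S r b :|: S b u \subset S r u.
    apply/subsetP => E'; rewrite inE => /orP[] hE'.
      move: (hE'); rewrite !inE => /andP[-> n] /=; apply/negP => c.
      apply: (key E') => //; rewrite inE; move: hE'; rewrite inE => /andP[-> _] /=.
      apply/negP => c2; move/negP: n; apply; apply: connect_trans c _.
      by rewrite csym.
    move: (hE'); rewrite !inE => /andP[-> n] /=; apply/negP => c.
    apply: (key E') => //; rewrite inE; move: hE'; rewrite inE => /andP[-> _] /=.
    apply/negP => c2; move/negP: n; apply; apply: connect_trans _ c.
    by rewrite csym.
  have disj : S r b :&: S b u = set0.
    apply/setP => E'; rewrite !inE; apply/negP => /andP[h1 h2].
    by apply: (key E'); rewrite inE.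
  rewrite /Ds; apply: leq_trans (subset_leq_card sub).
  by rewrite cardsU disj cards0 subn0 addnC.
have : \sum_u (Ds b u + k * (u \in B)) <= \sum_u (Ds r u + k * (u \in A)).
  by apply: leq_sum => u _; exact: pt.
rewrite !big_split /= -!big_distrr /= !sum_card.
have := cen b => h1 h2.
have : k * #|B| <= k * #|A| by lia.
by rewrite leq_pmul2l.
Qed.


Lemma cut_aux a b r : e a b -> connect (er [set a; b]) a r ->
  (forall v, \sum_u Ds r u <= \sum_u Ds v u) ->
  cut_number e [set a; b] = #|[set x | ~~ connect (er [set a; b]) r x]|.
Proof.
move=> eab har cen.
have nab : a != b by apply/eqP => h; rewrite h irr_e in eab.
have hle := far_le eab har cen.
rewrite /cut_number (bigD1 a) ?inE ?eqxx //= (bigD1 b) ?inE ?eqxx ?orbT //=.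
rewrite big_pred0; last first.
  by move=> x; rewrite !inE; case: (x == a); case: (x == b).
have -> : #|[set z | connect (er [set a; b]) a z]| =
          #|[set x | connect (er [set a; b]) r x]|.
  apply: eq_card => x; rewrite !inE; apply/idP/idP => h.
    by apply: connect_trans h; rewrite csym.
  exact: connect_trans h.
have -> : #|[set z | connect (er [set a; b]) b z]| =
          #|[set x | ~~ connect (er [set a; b]) r x]|.
  apply: eq_card => x; rewrite !inE; apply/idP/idP => h.
    apply/negP => h2; apply: (excl eab _ h); exact: connect_trans har h2.
  case/orP: (two_comp x eab) => // h2.
  by move/negP: h; case; apply: connect_trans h2; rewrite csym.
rewrite (minn_idPl (max_card _)); exact/minn_idPr.
by rewrite eq_sym.
Qed.

Lemma main r : (forall v, \sum_u Ds r u <= \sum_u Ds v u) -> Sc e = Sd e r.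
Proof.
move=> cen.
rewrite /Sd; under eq_bigr do rewrite dist_Ds.
have h1 : forall x, Ds r x = \sum_(E in edges e) (~~ connect (er E) r x : nat).
  move=> x; rewrite /Ds /S -sum1_card.
  rewrite (eq_bigl (fun E => (E \in edges e) && ~~ connect (er E) r x)); last first.
    by move=> E; rewrite inE.
  rewrite big_mkcondr /=; apply: eq_bigr => E _.
  by case: (~~ _).
under eq_bigr do rewrite h1.
rewrite exchange_big /Sc; apply: eq_bigr => E /edgesP [a [b [eab ->]]].
rewrite (_ : \sum_x _ = #|[set x | ~~ connect (er [set a; b]) r x]|); last first.
  by rewrite -sum_card; apply: eq_bigr => x _; rewrite inE.
case/orP: (two_comp r eab) => h; first exact: cut_aux.
rewrite set2C; apply: cut_aux; [by rewrite sym_e | by rewrite set2C | exact: cen].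
Qed.

End Proof.

Import Order.TTheory GRing.Theory Num.Theory.

Theorem lemma5p13 (T : finType) (e : rel T) (r : T) :
  symmetric e -> irreflexive e -> is_tree e -> is_centroid e r ->
  Sc e = Sd e r.
Proof.
move=> sym irr [conn acyc] cen.
apply: main => // v.
have n0 : (0 < #|T|)%N by apply/card_gt0P; exists r.
have := cen v; rewrite /deviation.
rewrite ler_pM2r ?invr_gt0 ?ltr0n // ler_nat.
by under eq_bigr do rewrite (dist_Ds sym irr conn acyc); under [X in _ <= X -> _]eq_bigr do rewrite (dist_Ds sym irr conn acyc).
Qed.
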